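(* Let $p\in(0,1)$, let $X,\gamma$ satisfy the standing assumptions in the context, and let $0\le x_0<\mathbb E[\gamma X]$. Let $q=\inf\{\mathrm{VaR}_p(g(X)):g\in\mathcal G_{\rm ns}\}$ and assume $q>0$ and $\mathbb P\big((X-q)\gamma\le\mathrm{VaR}_p((X-q)\gamma)\big)=p$. Then the problem of minimizing $\mathrm{VaR}_p(g(X))$ over $g\in\mathcal G_{\rm ns}$ admits a $\mathbb P$-a.s. unique solution, given by $g_X(X)=X\mathds 1_{\{(X-q)\gamma>c\}}+(X\wedge q)\mathds 1_{\{(X-q)\gamma\le c\}}$, where $c=\mathrm{VaR}_p((X-q)\gamma)$.
   Context: $(\Omega,\mathcal F,\mathbb P)$ is atomless. $\mathrm{VaR}_p(Y)=\inf\{x:\mathbb P(Y\le x)\ge p\}$. Standing assumptions: $X\ge0$ is a random variable whose distribution has a positive density on its support; $\gamma:\mathbb R\to\mathbb R$ is continuous and strictly positive; $\gamma$ also denotes $\gamma(X)$; $\mathbb E[\gamma]=1$, $\mathbb E[\gamma X]<\infty$. With $\mathcal G_1$ the measurable functions $\mathbb R\to\mathbb R$, $\mathcal G_{\rm ns}=\{g\in\mathcal G_1:\mathbb E[\gamma g(X)]\ge x_0,\ 0\le g(X)\le X\}$. *)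

(* Defs.v *)
From HB Require Import structures.
From mathcomp Require Import all_boot all_order all_algebra.
From mathcomp Require Import all_classical all_reals all_analysis.
Set Implicit Arguments. Unset Strict Implicit. Unset Printing Implicit Defensive.
Import Order.TTheory GRing.Theory Num.Theory.
Import numFieldNormedType.Exports.
Local Open Scope classical_set_scope.
Local Open Scope ring_scope.

Definition atomless d (T : measurableType d) (R : realType)
  (P : probability T R) : Prop :=
  forall A : set T, measurable A -> (0 < P A)%E ->
    exists2 B : set T, measurable B & B `<=` A /\ (0 < P B)%E /\ (P B < P A)%E.

Definition law_support d (T : measurableType d) (R : realType)
  (P : probability T R) (X : T -> R) : set R :=
  [set x | forall e : R, 0 < e -> (0 < P (X @^-1` ball x e))%E].

Definition has_pos_density_on_support d (T : measurableType d) (R : realType)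
  (P : probability T R) (X : T -> R) : Prop :=
  exists f : R -> R,
    measurable_fun setT f /\ (forall x, 0 <= f x) /\
    (forall A : set R, measurable A ->
        P (X @^-1` A) = (\int[lebesgue_measure]_(x in A) (f x)%:E)%E) /\
    (forall x, law_support P X x -> 0 < f x).

Definition VaR d (T : measurableType d) (R : realType)
  (P : probability T R) (p : R) (Y : T -> R) : R :=
  inf [set x : R | (p%:E <= P [set w | (Y w <= x)%R])%E].

Definition G_ns d (T : measurableType d) (R : realType)
  (P : probability T R) (X : T -> R) (gamma : R -> R) (x0 : R) : set (R -> R) :=
  [set g | measurable_fun setT g /\
           (x0%:E <= 'E_P[fun w => (gamma (X w) * g (X w))%R])%E /\
           (forall w, (0 <= g (X w) <= X w)%R)].

(* Main.v *)
Require Import Defs.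
From HB Require Import structures.
From mathcomp Require Import all_boot all_order all_algebra.
From mathcomp Require Import all_classical all_reals all_analysis.
From mathcomp Require Import measurable_realfun lra.
Import Order.TTheory GRing.Theory Num.Theory.
Import numFieldNormedType.Exports.
Local Open Scope classical_set_scope.
Local Open Scope ring_scope.
Set Implicit Arguments. Unset Strict Implicit.

Lemma mle d (T : measurableType d) (R : realType) (Y : T -> R) (x : R) :
  measurable_fun setT Y -> measurable [set w | Y w <= x].
Proof.
move=> mY; have := mY measurableT _ (measurable_itv `]-oo, x]).
rewrite setTI; congr measurable; apply/seteqP; split => w /=; by rewrite in_itv.
Qed.
Arguments mle {d T R Y} x.

Lemma S_ne d (T : measurableType d) (R : realType) (P : probability T R)
  (Y : T -> R) (p : R) : measurable_fun setT Y -> p < 1 ->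
  exists x : R, (p%:E <= P [set w | (Y w <= x)%R])%E.
Proof.
move=> mY p1; apply: contrapT => /forallNP H.
pose F n := [set w | Y w <= n%:R].
have ndF : nondecreasing_seq F.
  by move=> m n mn; apply/subsetPset => w; rewrite /F /=; move/le_trans; apply; rewrite ler_nat.
have cv := @nondecreasing_cvg_mu _ _ _ P F (fun n => mle _ mY)
  (bigcupT_measurable _ (fun n => mle _ mY)) ndF.
have hU : \bigcup_n F n = setT.
  apply/seteqP; split => // w _; exists (Num.truncn `|Y w|).+1 => //.
  rewrite /F /=; apply: le_trans (ltW (truncnS_gt _)); exact: ler_norm.
rewrite hU in cv.
have : (P setT <= p%:E)%E.
  rewrite -(cvg_lim _ cv) //.
  apply: lime_le; first by apply/cvg_ex; eexists; exact: cv.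
  by apply: nearW => n /=; have := H n%:R; move/negP; rewrite -ltNge => /ltW.
by rewrite probability_setT lee_fin leNgt p1.
Qed.

Lemma VaR_lb d (T : measurableType d) (R : realType) (P : probability T R)
  (Y : T -> R) (p : R) : 0 < p -> (forall w, 0 <= Y w) ->
  has_lbound [set x : R | (p%:E <= P [set w | (Y w <= x)%R])%E].
Proof.
move=> p0 Y0; exists 0 => x /= Sx; rewrite leNgt; apply/negP => x0.
have : [set w | Y w <= x] = set0.
  by apply/seteqP; split => // w /= Yx; move: (lt_le_trans (le_lt_trans (Y0 w) (le_lt_trans Yx x0)) (lexx 0)); rewrite ltxx.
by move=> E; move: Sx; rewrite E measure0 lee_fin leNgt p0.
Qed.

Lemma VaR_le d (T : measurableType d) (R : realType) (P : probability T R)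
  (Y : T -> R) (p v : R) : 0 < p -> (forall w, 0 <= Y w) ->
  (p%:E <= P [set w | (Y w <= v)%R])%E -> VaR P p Y <= v.
Proof. by move=> p0 Y0 H; exact: (ge_inf (VaR_lb P p0 Y0) H). Qed.

Lemma VaR_ge0 d (T : measurableType d) (R : realType) (P : probability T R)
  (Y : T -> R) (p : R) : 0 < p -> (forall w, 0 <= Y w) -> 0 <= VaR P p Y.
Proof.
move=> p0 Y0; rewrite /VaR.
have [->|ne] := eqVneq [set x : R | (p%:E <= P [set w | (Y w <= x)%R])%E] set0.
  by rewrite inf0.
apply: lb_le_inf; first exact/set0P.
move=> x /= Sx; rewrite leNgt; apply/negP => x0.
have : [set w | Y w <= x] = set0.
  by apply/seteqP; split => // w /= Yx; move: (lt_le_trans (le_lt_trans (Y0 w) (le_lt_trans Yx x0)) (lexx 0)); rewrite ltxx.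
by move=> E; move: Sx; rewrite E measure0 lee_fin leNgt p0.
Qed.

Lemma VaR_P d (T : measurableType d) (R : realType) (P : probability T R)
  (Y : T -> R) (p v : R) : 0 < p -> p < 1 -> (forall w, 0 <= Y w) ->
  measurable_fun setT Y ->
  VaR P p Y <= v -> (p%:E <= P [set w | (Y w <= v)%R])%E.
Proof.
move=> p0 p1 Y0 mY Vv.
pose F n := [set w | Y w <= v + (n.+1%:R)^-1].
have mF n : measurable (F n) by exact: mle.
have niF : nonincreasing_seq F.
  move=> m n mn; apply/subsetPset => w; rewrite /F /= => /le_trans; apply.
  by rewrite lerD2l lef_pV2 ?posrE // ler_nat.
have hI : \bigcap_n F n = [set w | Y w <= v].
  apply/seteqP; split => w /=; last first.
    by move=> Yv n _; rewrite /F /= (le_trans Yv)// lerDl.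
  move=> H; rewrite leNgt; apply/negP => vY.
  have := H (Num.truncn (Y w - v)^-1) I; rewrite /F /= -lerBlDl leNgt => /negP; apply.
  rewrite -[X in _ < X]invrK ltf_pV2 ?posrE ?invr_gt0 ?subr_gt0 //.
  exact: truncnS_gt.
have cv := @nonincreasing_cvg_mu _ _ _ P F (le_lt_trans (probability_le1 P (mF 0%N)) (ltry _))
  mF (bigcapT_measurable mF) niF.
rewrite hI in cv.
rewrite -(cvg_lim _ cv) //.
apply: lime_ge; first by apply/cvg_ex; eexists; exact: cv.
apply: nearW => n /=.
have [x Sx] := S_ne P mY p1.
have ne : [set x : R | (p%:E <= P [set w | (Y w <= x)%R])%E] !=set0 by exists x.
have lt : VaR P p Y < v + n.+1%:R^-1 by rewrite (le_lt_trans Vv)// ltrDl invr_gt0 ltr0Sn.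
have [y Sy ylt] := inf_lt ne lt.
apply: (le_trans Sy); apply: le_measure; rewrite ?inE; [exact: mle|exact: mF|].
move=> w /= Yy; rewrite /F /=; exact: (le_trans Yy (ltW ylt)).
Qed.

Lemma int_add d (T : measurableType d) (R : realType) (mu : {measure set T -> \bar R})
  (f g : T -> R) : measurable_fun setT f -> measurable_fun setT g ->
  (forall x, 0 <= f x) -> (forall x, 0 <= g x) ->
  (\int[mu]_x ((f x + g x)%:E) = \int[mu]_x (f x)%:E + \int[mu]_x (g x)%:E)%E.
Proof.
move=> mf mg f0 g0; under eq_integral do rewrite EFinD.
by rewrite ge0_integralD //; [move=> x _; rewrite lee_fin|exact/measurable_EFinP|
  move=> x _; rewrite lee_fin|exact/measurable_EFinP].
Qed.

Lemma int_mono d (T : measurableType d) (R : realType) (mu : {measure set T -> \bar R})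
  (f g : T -> R) : measurable_fun setT f -> measurable_fun setT g ->
  (forall x, 0 <= f x) -> (forall x, f x <= g x) ->
  (\int[mu]_x (f x)%:E <= \int[mu]_x (g x)%:E)%E.
Proof.
move=> mf mg f0 fg; apply: ge0_le_integral => //.
- by move=> x _; rewrite lee_fin.
- exact/measurable_EFinP.
- exact/measurable_EFinP.
- by move=> x _; rewrite lee_fin.
Qed.

Lemma int_ind d (T : measurableType d) (R : realType) (mu : {measure set T -> \bar R})
  (B : set T) (k : R) : measurable B -> 0 <= k ->
  (\int[mu]_x ((k * \1_B x)%:E) = k%:E * mu B)%E.
Proof.
move=> mB k0; rewrite (@integralZl_indic _ _ _ mu setT measurableT (fun _ => B)) //.
  by rewrite integral_indic // setIT.
by move=> k0'; move: (lt_le_trans k0' k0); rewrite ltxx.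
Qed.

Lemma key_pt (R : realType) (x z y q v c : R) : 0 < z -> 0 <= y -> y <= x -> q <= v -> 0 <= c ->
  z * y + c * ((y <= v)%R)%:R <= z * (if c < (x - q) * z then x else Num.min x q) + (v - q) * z + c * (((x-q)*z <= c)%R)%:R.
Proof.
move=> z0 y0 yx qv c0.
have zyx : z * y <= z * x by rewrite ler_wpM2l // ltW.
have vq : 0 <= (v - q) * z by rewrite mulr_ge0 // ?subr_ge0 // ltW.
case: (ltP c ((x-q)*z)) => hc; case: (leP y v) => hy /=; rewrite ?mulr1n ?mulr0n ?mulr1 ?mulr0 ?addr0.
- have : z * y <= z * v by rewrite ler_wpM2l // ltW.
  nra.
- lra.
- have : z * y <= z * v by rewrite ler_wpM2l // ltW.
  move=> ?; have -> : Num.min x q = if x < q then x else q by [].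
  case: (ltP x q) => xq; nra.
- have -> : Num.min x q = if x < q then x else q by [].
  case: (ltP x q) => xq; nra.
Qed.

Lemma uniq_pt (R : realType) (x z y q c : R) : 0 < z -> 0 <= y -> y <= x ->
  z * (if c < (x - q) * z then x else Num.min x q) + c * (((x-q)*z <= c)%R)%:R
   - (z * y + c * ((y <= q)%R)%:R) = 0 ->
  (y = (if c < (x - q) * z then x else Num.min x q) /\ (y <= q -> (x-q)*z <= c))
   \/ ((x-q)*z <= c /\ ~ (y <= q)).
Proof.
move=> z0 y0 yx.
case: (ltP c ((x-q)*z)) => hc; case: (leP y q) => hy /=;
  rewrite ?mulr1n ?mulr0n ?mulr1 ?mulr0 ?addr0 ?subr0 => h.
- exfalso; have : z * y <= z * q by rewrite ler_wpM2l // ltW.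
  nra.
- left; split => //.
  have : z * (x - y) = 0 by lra.
  move/eqP; rewrite mulf_eq0 (gt_eqF z0) /= subr_eq0 => /eqP ->//.
- left; split => //; have : z * (Num.min x q - y) = 0 by lra.
  move/eqP; rewrite mulf_eq0 (gt_eqF z0) /= subr_eq0 => /eqP ->//.
- by right; split => //; apply/negP; rewrite -ltNge.
Qed.

Lemma eps_pt (R : realType) (x z q e : R) (b : bool) : 0 < z -> 0 <= e ->
  z * (if b then x else Num.min x q) <= z * (if b then x else Num.min x (q - e)) + e * z.
Proof.
move=> z0 e0; case: b; first by rewrite lerDl mulr_ge0 // ltW.
have -> : Num.min x q = if x < q then x else q by [].
have -> : Num.min x (q - e) = if x < q - e then x else q - e by [].
case: (ltP x q) => h1; case: (ltP x (q - e)) => h2; nra.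
Qed.

Lemma bnd_pt (R : realType) (x a : R) (b : bool) : 0 <= x -> 0 <= a ->
  0 <= (if b then x else Num.min x a) <= x.
Proof.
move=> x0 a0; case: b; first by rewrite x0 lexx.
have -> : Num.min x a = if x < a then x else a by [].
case: (ltP x a) => h; apply/andP; split => //; try exact: lexx; try exact: ltW; exact: (le_trans x0 (ltW h)).
Qed.

Lemma minle_pt (R : realType) (x a : R) : Num.min x a <= a.
Proof.
have -> : Num.min x a = if x < a then x else a by [].
by case: (ltP x a) => h //; exact: ltW.
Qed.

Lemma indic_bool d (T : measurableType d) (R : realType) (b : T -> bool) (w : T) :
  \1_[set w | b w] w = (b w)%:R :> R.
Proof.
rewrite indicE; case: (boolP (b w)) => H; first by rewrite mem_set.
by rewrite memNset //= => H'; move: H; rewrite H'.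
Qed.

Lemma int_indP d (T : measurableType d) (R : realType) (P : probability T R)
  (B : set T) (k : R) : measurable B -> 0 <= k ->
  (\int[P]_x ((k * \1_B x)%:E) = k%:E * P B)%E.
Proof. exact: int_ind. Qed.

Lemma measureDIP d (T : measurableType d) (R : realType) (P : probability T R)
  (A B : set T) : measurable A -> measurable B ->
  P A = (P (A `\` B) + P (A `&` B))%E.
Proof. exact: measureDI. Qed.

Unset Implicit Arguments.
Theorem corollary1 (d : measure_display) (T : measurableType d) (R : realType)
  (P : probability T R) (X : {RV P >-> R}) (gamma : R -> R) (p x0 : R) :
  atomless P ->
  (forall w, 0 <= X w) ->
  has_pos_density_on_support P X ->
  continuous gamma -> (forall x, 0 < gamma x) ->
  ('E_P[fun w => gamma (X w)] = 1)%E ->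
  ('E_P[fun w => (gamma (X w) * X w)%R] < +oo)%E ->
  0 < p < 1 ->
  0 <= x0 -> (x0%:E < 'E_P[fun w => (gamma (X w) * X w)%R])%E ->
  let q := inf [set VaR P p (fun w => g (X w)) | g in G_ns P X gamma x0] in
  let c := VaR P p (fun w => (X w - q) * gamma (X w)) in
  0 < q ->
  P [set w | (X w - q) * gamma (X w) <= c] = p%:E ->
  let gX := fun x : R => if c < (x - q) * gamma x then x else Num.min x q in
  [/\ G_ns P X gamma x0 gX,
      (forall g, G_ns P X gamma x0 g ->
         VaR P p (fun w => gX (X w)) <= VaR P p (fun w => g (X w))) &
      (forall g, G_ns P X gamma x0 g ->
         (forall h, G_ns P X gamma x0 h ->
            VaR P p (fun w => g (X w)) <= VaR P p (fun w => h (X w))) ->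
         {ae P, forall w, g (X w) = gX (X w)})].
Proof.
move=> _ X0 _ cg g0 Eg1 EgXfin /andP[p0 p1] x00 x0lt q c q0 PA gX.
have EE (f : T -> R) : ('E_P[f] = \int[P]_w (f w)%:E)%E by rewrite unlock.
have mX : measurable_fun setT X := measurable_funPT X.
have mgam : measurable_fun setT gamma := continuous_measurable_fun cg.
have mZ : measurable_fun setT (fun w => gamma (X w)) := measurableT_comp mgam mX.
have mcomp (h : R -> R) : measurable_fun setT h ->
    measurable_fun setT (fun w => gamma (X w) * h (X w)).
  by move=> mh; apply: measurable_funM => //; exact: measurableT_comp mh mX.
have mhX (h : R -> R) : measurable_fun setT h -> measurable_fun setT (fun w => h (X w)).
  by move=> mh; exact: measurableT_comp mh mX.
pose Yf w := (X w - q) * gamma (X w).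
have mY : measurable_fun setT Yf.
  by apply: measurable_funM => //; apply: measurable_funB => //.
pose A := [set w | Yf w <= c].
have mA : measurable A := mle c mY.
have PA' : P A = p%:E := PA.
have mgX : measurable_fun setT gX.
  apply: measurable_fun_ifT.
  - apply: measurable_fun_ltr => //; apply: measurable_funM => //.
    by apply: measurable_funB.
  - exact: measurable_id.
  - exact: measurable_minr.
rewrite !EE in Eg1 EgXfin x0lt.
have Gid : G_ns P X gamma x0 id.
  split; first exact: measurable_id.
  split; first by rewrite EE; exact: (ltW x0lt).
  by move=> w; rewrite lexx X0.
have qlb g : G_ns P X gamma x0 g -> q <= VaR P p (fun w => g (X w)).
  move=> Gg; apply: ge_inf; last by exists g.
  exists 0 => _ [g' [_ [_ Gg']] <-]; apply: VaR_ge0 => // w.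
  by case/andP: (Gg' w).
have Z0 w : 0 < gamma (X w) := g0 (X w).
have intZ (k : R) : 0 <= k -> (\int[P]_w (k * gamma (X w))%:E = k%:E)%E.
  move=> k0; under eq_integral do rewrite EFinM.
  rewrite ge0_integralZl_EFin //; last exact/measurable_EFinP.
    by rewrite Eg1 mule1.
  by move=> w _; rewrite lee_fin ltW.
have gXle : (\int[P]_w (gamma (X w) * gX (X w))%:E <= x0%:E)%E.
  apply/lee_addgt0Pr => e e0.
  pose e' := Num.min e (q / 2).
  have e'0 : 0 < e' by rewrite lt_min e0 divr_gt0.
  have e'q : e' < q.
    by rewrite (le_lt_trans (minle_pt _ _)) // ltr_pdivrMr // ltr_pMr // ltr1n.
  have e'e : e' <= e by rewrite ge_min lexx.
  pose h x := if c < (x - q) * gamma x then x else Num.min x (q - e').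
  have mh : measurable_fun setT h.
    apply: measurable_fun_ifT.
    - apply: measurable_fun_ltr => //; apply: measurable_funM => //.
      by apply: measurable_funB.
    - exact: measurable_id.
    - exact: measurable_minr.
  have hb w : 0 <= h (X w) <= X w.
    by apply: bnd_pt => //; rewrite subr_ge0 ltW.
  have hlt : (\int[P]_w (gamma (X w) * h (X w))%:E < x0%:E)%E.
    rewrite ltNge; apply/negP => hE.
    have Gh : G_ns P X gamma x0 h by split => //; split => //; rewrite EE.
    have := qlb h Gh.
    have : VaR P p (fun w => h (X w)) <= q - e'.
      apply: VaR_le => //; first by move=> w; case/andP: (hb w).
      rewrite -PA'; apply: le_measure; rewrite ?inE; [exact: mA| apply: mle; exact: mhX|].
      move=> w /= Aw; rewrite /h ltNge.
      have -> : ((X w - q) * gamma (X w) <= c) = true by exact: Aw.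
      exact: minle_pt.
    move=> H1 H2; have H3 := le_trans H2 H1; lra.
  have H1 : (\int[P]_w (gamma (X w) * gX (X w))%:E <=
      \int[P]_w (gamma (X w) * h (X w) + e' * gamma (X w))%:E)%E.
    apply: int_mono.
    - exact: mcomp.
    - by apply: measurable_funD; [exact: mcomp|apply: measurable_funM].
    - move=> w; apply: mulr_ge0; first exact: ltW.
      by case/andP: (bnd_pt (c < (X w - q) * gamma (X w)) (X0 w) (ltW q0)).
    - by move=> w; apply: eps_pt => //; exact: ltW.
  rewrite int_add in H1; last 4 first.
  - exact: mcomp.
  - exact: measurable_funM.
  - move=> w; apply: mulr_ge0; first exact: ltW.
    by case/andP: (hb w).
  - by move=> w; apply: mulr_ge0; exact: ltW.
  rewrite intZ in H1; last exact: ltW.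
  apply: (le_trans H1); apply: leeD; [exact: ltW| by rewrite lee_fin].
have gXX w : 0 <= gX (X w) <= X w by apply: bnd_pt => //; exact: ltW.
have ZgX0 w : 0 <= gamma (X w) * gX (X w).
  by apply: mulr_ge0; [exact: ltW| case/andP: (gXX w)].
have c0 : 0 < c.
  rewrite ltNge; apply/negP => cle.
  have E1 : (\int[P]_w (gamma (X w) * gX (X w))%:E = \int[P]_w (gamma (X w) * X w)%:E)%E.
    apply: eq_integral => w _; congr (_ * _)%:E; rewrite /gX; case: ltP => // hc.
    have Z0w := Z0 w.
    have xq : X w <= q by nra.
    have -> : Num.min (X w) q = if X w < q then X w else q by [].
    by case: ltP => // hh; apply/eqP; rewrite eq_le hh xq.
  by move: gXle; rewrite E1 => H; move: (lt_le_trans x0lt H); rewrite ltxx.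
have keyI g v : G_ns P X gamma x0 g -> q <= v ->
  (\int[P]_w (gamma (X w) * g (X w))%:E + c%:E * P [set w | (g (X w) <= v)%R] <=
   \int[P]_w (gamma (X w) * gX (X w))%:E + (v - q)%:E + c%:E * p%:E)%E.
  move=> [mg [_ gb]] qv.
  have mB : measurable [set w | (g (X w) <= v)%R] := mle v (mhX g mg).
  have mgX' := mcomp g mg.
  have g0' w : 0 <= gamma (X w) * g (X w).
    by apply: mulr_ge0; [exact: ltW| case/andP: (gb w)].
  have mIB : measurable_fun setT (fun w => c * \1_[set w | (g (X w) <= v)%R] w).
    by apply: measurable_funM => //; exact: measurable_indic.
  have mIA : measurable_fun setT (fun w => c * \1_A w).
    by apply: measurable_funM => //; exact: measurable_indic.
  have IB0 w : 0 <= c * \1_[set w | (g (X w) <= v)%R] w.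
    by apply: mulr_ge0; [exact: ltW| by rewrite indicE ler0n].
  have IA0 w : 0 <= c * \1_A w.
    by apply: mulr_ge0; [exact: ltW| by rewrite indicE ler0n].
  have mVZ : measurable_fun setT (fun w => (v - q) * gamma (X w)) by exact: measurable_funM.
  have VZ0 w : 0 <= (v - q) * gamma (X w) by apply: mulr_ge0; [rewrite subr_ge0|exact: ltW].
  have mS1 : measurable_fun setT (fun w => gamma (X w) * gX (X w) + (v - q) * gamma (X w)).
    by apply: measurable_funD => //; exact: mcomp.
  have S10 w : 0 <= gamma (X w) * gX (X w) + (v - q) * gamma (X w) by apply: addr_ge0.
  rewrite -(int_ind P mB (ltW c0)) -PA' -(int_ind P mA (ltW c0)).
  rewrite -(intZ (v - q)); last by rewrite subr_ge0.
  rewrite -(int_add P mgX' mIB g0' IB0).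
  rewrite -(int_add P (mcomp gX mgX) mVZ ZgX0 VZ0).
  rewrite -(int_add P mS1 mIA S10 IA0).
  apply: int_mono.
  - exact: measurable_funD mgX' mIB.
  - exact: measurable_funD mS1 mIA.
  - by move=> w; apply: addr_ge0; [exact: g0'|exact: IB0].
  move=> w; rewrite !indic_bool /gX.
  by case/andP: (gb w) => ga gb'; apply: key_pt => //; exact: ltW.
have fcp : (c * p)%:E \is a fin_num by [].
have GgX : G_ns P X gamma x0 gX.
  split => //; split => //; rewrite EE.
  apply/lee_addgt0Pr => e e0.
  have ne : [set VaR P p (fun w => g (X w)) | g in G_ns P X gamma x0] !=set0.
    by exists (VaR P p (fun w => id (X w))), id.
  have qe : q < q + e by rewrite ltrDl.
  have [_ [g Gg <-] Vlt] := inf_lt ne qe.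
  have Gg' := Gg; case: Gg' => [mg [Eg gb]].
  have PB := VaR_P (P:=P) p0 p1 (fun w => (andP (gb w)).1) (mhX g mg) (ltW Vlt).
  have K := keyI g (q + e) Gg (ltW qe).
  rewrite (_ : q + e - q = e) in K; last by rewrite addrC addKr.
  rewrite EE in Eg.
  rewrite -(leeD2rE _ _ fcp).
  apply: le_trans K; apply: leeD => //.
  by rewrite EFinM; apply: lee_wpmul2l => //; rewrite lee_fin ltW.
have VgX : VaR P p (fun w => gX (X w)) <= q.
  apply: VaR_le => //; first by move=> w; case/andP: (gXX w).
  rewrite -PA'; apply: le_measure; rewrite ?inE; [exact: mA| apply: mle; exact: mhX|].
  move=> w /= Aw; rewrite /gX ltNge.
  have -> : ((X w - q) * gamma (X w) <= c) = true by exact: Aw.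
  exact: minle_pt.
split => //.
  by move=> g Gg; apply: le_trans VgX (qlb g Gg).
move=> g Gg hopt.
have Gg' := Gg; case: Gg' => [mg [Eg gb]]; rewrite EE in Eg.
have Vg : VaR P p (fun w => g (X w)) <= q := le_trans (hopt gX GgX) VgX.
have PB := VaR_P (P:=P) p0 p1 (fun w => (andP (gb w)).1) (mhX g mg) Vg.
pose B := [set w | (g (X w) <= q)%R].
have mB : measurable B := mle q (mhX g mg).
have mgX' := mcomp g mg.
have g0' w : 0 <= gamma (X w) * g (X w).
  by apply: mulr_ge0; [exact: ltW| case/andP: (gb w)].
have mIB : measurable_fun setT (fun w => c * \1_B w).
  by apply: measurable_funM => //; exact: measurable_indic.
have mIA : measurable_fun setT (fun w => c * \1_A w).
  by apply: measurable_funM => //; exact: measurable_indic.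
have IB0 w : 0 <= c * \1_B w by apply: mulr_ge0; [exact: ltW| by rewrite indicE ler0n].
have IA0 w : 0 <= c * \1_A w by apply: mulr_ge0; [exact: ltW| by rewrite indicE ler0n].
pose S1 w := gamma (X w) * g (X w) + c * \1_B w.
pose S2 w := gamma (X w) * gX (X w) + c * \1_A w.
have mS1 : measurable_fun setT S1 := measurable_funD mgX' mIB.
have mS2 : measurable_fun setT S2 := measurable_funD (mcomp gX mgX) mIA.
have S10 w : 0 <= S1 w by apply: addr_ge0.
have S20 w : 0 <= S2 w by apply: addr_ge0.
pose Dfn w := S2 w - S1 w.
have mD : measurable_fun setT Dfn := measurable_funB mS2 mS1.
have D0 w : 0 <= Dfn w.
  rewrite subr_ge0 /S1 /S2 /B /A !indic_bool /gX.
  case/andP: (gb w) => ga gb'.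
  have := key_pt (q:=q) (v:=q) (c:=c) (Z0 w) ga gb' (lexx q) (ltW c0).
  by rewrite subrr mul0r addr0.
have Ieq : (\int[P]_w (S1 w)%:E + \int[P]_w (Dfn w)%:E = \int[P]_w (S2 w)%:E)%E.
  rewrite -(int_add P mS1 mD S10 D0); apply: eq_integral => w _.
  by rewrite /Dfn addrC subrK.
rewrite /S1 /S2 (int_add P mgX' mIB g0' IB0) (int_add P (mcomp gX mgX) mIA ZgX0 IA0) in Ieq.
rewrite (int_indP P mB (ltW c0)) (int_indP P mA (ltW c0)) PA' in Ieq.
set a := (\int[P]_w (gamma (X w) * g (X w))%:E)%E in Eg Ieq.
set b := (\int[P]_w (gamma (X w) * gX (X w))%:E)%E in gXle Ieq.
set I := (\int[P]_w (Dfn w)%:E)%E in Ieq.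
have I0 : (0 <= I)%E by apply: integral_ge0 => w _; rewrite lee_fin.
have afin : a \is a fin_num.
  rewrite ge0_fin_numE; last by apply: integral_ge0 => w _; rewrite lee_fin.
  apply: le_lt_trans EgXfin; apply: (int_mono P mgX' (measurable_funM mZ mX) g0').
  by move=> w; apply: ler_wpM2l; [exact: ltW| case/andP: (gb w)].
have PBfin : P B \is a fin_num.
  by rewrite ge0_fin_numE // (le_lt_trans (probability_le1 P mB) (ltry 1)).
have cPBfin : (c%:E * P B)%E \is a fin_num by rewrite fin_numM.
have aPfin : (a + c%:E * P B)%E \is a fin_num by rewrite fin_numD afin cPBfin.
have Ile : (I <= 0)%E.
  rewrite -(leeD2lE _ _ aPfin) Ieq adde0; apply: leeD; first exact: le_trans gXle Eg.
  by apply: lee_wpmul2l => //; rewrite lee_fin ltW.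
have PBle : (P B <= p%:E)%E.
  rewrite -(@lee_pmul2l _ c%:E) // ?lte_fin //.
  rewrite -(leeD2lE _ _ afin); apply: le_trans (leeDl _ I0) _; rewrite Ieq.
  by apply: leeD => //; exact: le_trans gXle Eg.
have IE : I = 0%E by apply/eqP; rewrite eq_le Ile I0.
have PBE : P B = p%:E by apply/eqP; rewrite eq_le PBle PB.
have mDE : measurable_fun setT (fun w => (Dfn w)%:E) by exact/measurable_EFinP.
have aeD := (ae_eq_integral_abs P measurableT mDE).1.
have {aeD} aeD : ae_eq P setT (fun w => (Dfn w)%:E) (cst 0%E).
  apply: aeD; rewrite -[RHS]IE; apply: eq_integral => w _.
  by rewrite gee0_abs // lee_fin.
have aeS : \forall w \ae P, (g (X w) = gX (X w) /\ (B w -> A w)) \/ (A w /\ ~ B w).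
  apply: filterS aeD => w /(_ Logic.I) /= Dw.
  have {}Dw : Dfn w = 0 by move: Dw => [].
  case/andP: (gb w) => ga gb'.
  move: Dw; rewrite /Dfn /S1 /S2 /B /A !indic_bool /gX.
  by move/(uniq_pt (Z0 w) ga gb').
have BAneg : P.-negligible (B `\` A).
  apply: negligibleS aeS => w [Bw nAw] /= [[_ H]|[Aw _]]; apply: nAw => //; exact: H.
have BA0 : P (B `\` A) = 0%E by apply/negligibleP => //; exact: measurableD.
have AB0 : P (A `\` B) = 0%E.
  have h1 := measureDIP P mA mB.
  have h2 := measureDIP P mB mA.
  have finI : P (A `&` B) \is a fin_num.
    by rewrite ge0_fin_numE // (le_lt_trans (probability_le1 P (measurableI _ _ mA mB)) (ltry 1)).
  rewrite PA' in h1; rewrite PBE BA0 add0e setIC in h2.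
  by rewrite -(addeK (P (A `\` B)) finI) -h1 h2 subee.
have aeAB : \forall w \ae P, ~ (A `\` B) w.
  exists (A `\` B); split => //; first exact: measurableD.
  by move=> w /= /contrapT.
apply: filterS2 aeS aeAB => w [[-> _]|[Aw nB]] nAB //.
by exfalso; apply: nAB; split.
Qed.
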